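(* Suppose all distributions are Gaussian with a common known variance $\sigma^2>0$, i.e. $\nu_{a,i}=\mathcal N(\mu_{a,i},\sigma^2)$, let $\boldsymbol\mu\in\mathcal L$ and assume $\boldsymbol\beta\neq0$. Let \[ (u_0^\star,\dots,u_K^\star)\in\operatorname*{argmax}_{\mathbf u\in\Sigma_{K+1}}\ \min_{b\in[K]}\ \frac{\Delta_b^2}{2\left(\frac1{u_0}+\frac1{u_b}\right)},\qquad \Delta_b=\mu_0-\mu_b. \] Then the optimal weights for the active mode (maximizers over $\mathcal C_{\mathrm{active}}$ in the definition of $T^\star_{\mathrm{active}}(\boldsymbol\mu)^{-1}$) are given by \[ w^\star_{a,i}=u^\star_a\,\frac{|\beta_i|}{\sum_{j=1}^J|\beta_j|}\qquad\text{for all }a\in\{0,\dots,K\},\ i\le J. \] If in addition $\boldsymbol\alpha=\boldsymbol\beta$, the same weights are optimal for the agnostic and the proportional modes.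
   Context: Arms $a\in\{0,\dots,K\}$ with $K\ge1$ (arm $0$ the control), subpopulations $i\in[J]$, means $\boldsymbol\mu=(\mu_{a,i})$; the KL divergence between $\mathcal N(x,\sigma^2)$ and $\mathcal N(y,\sigma^2)$ is $d(x,y)=(x-y)^2/(2\sigma^2)$. Known $\boldsymbol\beta\in\mathbb R^J$ and $\boldsymbol\alpha\in\Sigma_J$ ($\Sigma_n$ the probability simplex). $\mu_a=\sum_i\beta_i\mu_{a,i}$, $\mathcal S_{\boldsymbol\beta}(\boldsymbol\mu)=\{a\in[K]:\mu_a>\mu_0\}$, $\mathcal L=\{\boldsymbol\mu\in\mathbb R^{(K+1)\times J}:\mu_a\ne\mu_0\ \forall a\in[K]\}$, $\mathrm{Alt}_{\boldsymbol\beta}(\boldsymbol\mu)=\{\boldsymbol\lambda\in\mathcal L:\mathcal S_{\boldsymbol\beta}(\boldsymbol\lambda)\neq\mathcal S_{\boldsymbol\beta}(\boldsymbol\mu)\}$, with $\lambda_a=\sum_i\beta_i\lambda_{a,i}$. For a constraint set $\mathcal C$, $T^\star(\boldsymbol\mu)^{-1}=\sup_{\mathbf w\in\mathcal C}\inf_{\boldsymbol\lambda\in\mathrm{Alt}_{\boldsymbol\beta}(\boldsymbol\mu)}\sum_{a,i}w_{a,i}d(\mu_{a,i},\lambda_{a,i})$; optimal weights are maximizers of this supremum. Active mode: $\mathcal C_{\mathrm{active}}=\Sigma_{(K+1)J}$; proportional: $\mathcal C_{\mathrm{prop}}=\{\mathbf w\in\Sigma_{(K+1)J}:\sum_aw_{a,i}=\alpha_i\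 \forall i\}$; agnostic: $\mathcal C_{\mathrm{agnostic}}=\{\mathbf w:w_{a,i}=\alpha_iu_a,\ \mathbf u\in\Sigma_{K+1}\}$. *)

(* Defs.v *)
From mathcomp Require Import all_boot all_order all_algebra.
From mathcomp Require Import classical_sets reals.
Set Implicit Arguments. Unset Strict Implicit. Unset Printing Implicit Defensive.
Import Order.TTheory GRing.Theory Num.Theory.
Local Open Scope ring_scope.
Local Open Scope classical_set_scope.

Section Defs.
Variables (R : realType) (K J : nat).

(* arms are 'I_K.+1 (arm ord0 is the control), subpopulations are 'I_J;
   a mean matrix / weight vector is a function 'I_K.+1 -> 'I_J -> R *)
Definition arm_mean (beta : 'I_J -> R) (m : 'I_K.+1 -> 'I_J -> R) (a : 'I_K.+1) : R :=
  \sum_(i < J) beta i * m a i.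

Definition S_beta (beta : 'I_J -> R) (m : 'I_K.+1 -> 'I_J -> R) : {set 'I_K.+1} :=
  [set a | (a != ord0) && (arm_mean beta m ord0 < arm_mean beta m a)].

Definition in_L (beta : 'I_J -> R) (m : 'I_K.+1 -> 'I_J -> R) : Prop :=
  forall a : 'I_K.+1, a != ord0 -> arm_mean beta m a != arm_mean beta m ord0.

Definition Alt (beta : 'I_J -> R) (mu : 'I_K.+1 -> 'I_J -> R)
  : set ('I_K.+1 -> 'I_J -> R) :=
  [set lam | in_L beta lam /\ S_beta beta lam != S_beta beta mu].

Definition kl_gauss (sigma x y : R) : R := (x - y) ^+ 2 / (2 * sigma ^+ 2).

Definition alt_objective (sigma : R) (beta : 'I_J -> R)
  (mu w : 'I_K.+1 -> 'I_J -> R) : R :=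
  inf [set (\sum_(a < K.+1) \sum_(i < J) w a i * kl_gauss sigma (mu a i) (lam a i))
      | lam in Alt beta mu].

Definition C_active (w : 'I_K.+1 -> 'I_J -> R) : Prop :=
  (forall a i, 0 <= w a i) /\ \sum_(a < K.+1) \sum_(i < J) w a i = 1.

Definition C_prop (alpha : 'I_J -> R) (w : 'I_K.+1 -> 'I_J -> R) : Prop :=
  C_active w /\ forall i, \sum_(a < K.+1) w a i = alpha i.

Definition in_simplex n (u : 'I_n -> R) : Prop :=
  (forall k, 0 <= u k) /\ \sum_(k < n) u k = 1.

Definition C_agnostic (alpha : 'I_J -> R) (w : 'I_K.+1 -> 'I_J -> R) : Prop :=
  exists u : 'I_K.+1 -> R, in_simplex u /\ forall a i, w a i = alpha i * u a.

Definition optimal_weights (C : ('I_K.+1 -> 'I_J -> R) -> Prop) (sigma : R)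
  (beta : 'I_J -> R) (mu w : 'I_K.+1 -> 'I_J -> R) : Prop :=
  C w /\ forall w', C w' -> alt_objective sigma beta mu w' <= alt_objective sigma beta mu w.

(* Delta_b^2 / (2 (1/u_0 + 1/u_b)), with the convention 1/0 = +oo,
   i.e. the term is 0 when u_0 = 0 or u_b = 0 *)
Definition pair_term (Delta u0 ub : R) : R :=
  if (0 < u0) && (0 < ub) then Delta ^+ 2 / (2 * (u0^-1 + ub^-1)) else 0.

Definition u_objective (beta : 'I_J -> R) (mu : 'I_K.+1 -> 'I_J -> R)
  (u : 'I_K.+1 -> R) : R :=
  \big[Order.min/pair_term (arm_mean beta mu ord0 - arm_mean beta mu ord_max)
                           (u ord0) (u ord_max)]_(b < K.+1 | b != ord0)
     pair_term (arm_mean beta mu ord0 - arm_mean beta mu b) (u ord0) (u b).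

End Defs.

(* Main.v *)
Require Import Defs.
From mathcomp Require Import all_boot all_order all_algebra.
From mathcomp Require Import classical_sets reals.
From mathcomp Require Import ring lra.
Import Order.TTheory GRing.Theory Num.Theory.
Local Open Scope ring_scope.

Lemma mean_shift (R : realType) (K J : nat) (beta : 'I_J -> R)
  (mu : 'I_K.+1 -> 'I_J -> R) (d : 'I_K.+1 -> R) (a : 'I_K.+1) :
  \sum_(j < J) `|beta j| != 0 ->
  arm_mean beta (fun a i => mu a i + d a / (\sum_(j < J) `|beta j|) * Num.sg (beta i)) a
  = arm_mean beta mu a + d a.
Proof.
move=> hS; rewrite /arm_mean.
under eq_bigr do rewrite mulrDr.
rewrite big_split /=; congr (_ + _).
under eq_bigr do rewrite mulrCA [beta _ * _]mulrC -normrEsg.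
by rewrite -mulr_sumr divfK.
Qed.

Lemma cs_ineq (R : realType) (J : nat) (beta x : 'I_J -> R) :
  0 < \sum_(j < J) `|beta j| ->
  (\sum_(i < J) beta i * x i) ^+ 2 / (\sum_(j < J) `|beta j|)
  <= \sum_(i < J) `|beta i| * x i ^+ 2.
Proof.
set S := \sum_(j < J) _; set X := \sum_(i < J) _ => hS.
set t := X / S.
have per : forall i, 2 * t * (beta i * x i) - t ^+ 2 * `|beta i| <= `|beta i| * x i ^+ 2.
  move=> i; case: (lerP 0 (beta i)) => hb; [rewrite ger0_norm // | rewrite ltr0_norm //].
    have := mulr_ge0 hb (sqr_ge0 (x i - t)); nra.
  have hb' : 0 <= - beta i by lra.
  have := mulr_ge0 hb' (sqr_ge0 (x i + t)); nra.
apply: le_trans (ler_sum _ (fun i _ => per i)).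
rewrite big_split /= sumrN -mulr_sumr -mulr_sumr -/X -/S /t.
have hS0 : S != 0 by rewrite gt_eqF.
rewrite le_eqVlt; apply/orP; left; apply/eqP; field.
by [].
Qed.

Lemma pair_ineq (R : realType) (D E X Y u0 ua : R) : 0 <= u0 -> 0 <= ua ->
  D * E <= 0 -> X - Y = D - E ->
  pair_term D u0 ua <= (u0 * X ^+ 2 + ua * Y ^+ 2) / 2.
Proof.
move=> h0 ha hDE hXY; rewrite /pair_term; case: ifP => [/andP[p0 pa]|_]; last first.
  by apply: divr_ge0 => //; apply: addr_ge0; apply: mulr_ge0 => //; apply: sqr_ge0.
have e : D ^+ 2 / (2 * (u0^-1 + ua^-1)) = D ^+ 2 * (u0 * ua) / (2 * (u0 + ua)).
  by field; rewrite ?gt_eqF // ?addr_gt0 //; lra.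
have h1 : D ^+ 2 <= (X - Y) ^+ 2 by rewrite hXY; nra.
have h2 := ler_wpM2r (mulr_ge0 h0 ha) h1.
have h3 := sqr_ge0 (u0 * X + ua * Y).
rewrite e ler_pdivrMr; last by nra.
nra.
Qed.

Lemma lower_bound (R : realType) (K J : nat) (sigma : R) (beta : 'I_J -> R)
  (mu : 'I_K.+1 -> 'I_J -> R) (ustar : 'I_K.+1 -> R) (lam : 'I_K.+1 -> 'I_J -> R) :
  0 < sigma -> 0 < \sum_(j < J) `|beta j| -> (forall a, 0 <= ustar a) ->
  Alt beta mu lam ->
  u_objective beta mu ustar / (sigma ^+ 2 * (\sum_(j < J) `|beta j|) ^+ 2) <=
  \sum_(a < K.+1) \sum_(i < J) (ustar a * (`|beta i| / \sum_(j < J) `|beta j|))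
      * kl_gauss sigma (mu a i) (lam a i).
Proof.
set S := \sum_(j < J) _ => hs hS hu [hL hne].
have [a Ha] : exists a, (a \in S_beta beta lam) != (a \in S_beta beta mu).
  apply/existsP.
  case: (boolP [exists a : 'I_K.+1, (a \in S_beta beta lam) != (a \in S_beta beta mu)]) => //.
  rewrite negb_exists => /forallP H; exfalso; move/negP: hne; apply.
  apply/eqP/setP => a; move: (H a); by case: (_ \in _); case: (_ \in _).
move: Ha; rewrite !inE.
case: (eqVneq a ord0) => [-> | a0] //= Ha.
set m := arm_mean beta mu; set l := arm_mean beta lam.
set F := fun a' => \sum_(i < J) (ustar a' * (`|beta i| / S)) * kl_gauss sigma (mu a' i) (lam a' i).
have s0 : sigma != 0 by rewrite gt_eqF.
have S0 : S != 0 by rewrite gt_eqF.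
have Fval : forall a', F a' = ustar a' / (2 * sigma ^+ 2 * S) *
     \sum_(i < J) `|beta i| * (mu a' i - lam a' i) ^+ 2.
  move=> a'; rewrite /F /kl_gauss mulr_sumr; apply: eq_bigr => i _; field; rewrite ?S0 ?s0 /=.
  by rewrite ?S0 ?s0.
have Fge0 : forall a', 0 <= F a'.
  move=> a'; rewrite /F; apply: sumr_ge0 => i _; apply: mulr_ge0.
    by apply: mulr_ge0 => //; apply: divr_ge0 => //; apply: ltW.
  by rewrite /kl_gauss; apply: divr_ge0; [apply: sqr_ge0 | apply: mulr_ge0 => //; apply: sqr_ge0].
have Flb : forall a', ustar a' * (m a' - l a') ^+ 2 / (2 * sigma ^+ 2 * S ^+ 2) <= F a'.
  move=> a'; rewrite Fval.
  have := @cs_ineq R J beta (fun i => mu a' i - lam a' i) hS.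
  have -> : \sum_(i < J) beta i * (mu a' i - lam a' i) = m a' - l a'.
    by rewrite /m /l /arm_mean -sumrB; apply: eq_bigr => i _; rewrite mulrBr.
  move=> hcs.
  have -> : ustar a' * (m a' - l a') ^+ 2 / (2 * sigma ^+ 2 * S ^+ 2) =
     ustar a' / (2 * sigma ^+ 2 * S) * ((m a' - l a') ^+ 2 / S).
    by field; rewrite ?S0 ?s0.
  apply: ler_wpM2l => //; apply: divr_ge0 => //; apply: mulr_ge0; last exact: ltW.
  by apply: mulr_ge0 => //; apply: sqr_ge0.
have hsplit : F ord0 + F a <= \sum_(a' < K.+1) F a'.
  rewrite (bigD1 ord0) //= (bigD1 a) //= addrA lerDl.
  by apply: sumr_ge0 => i _; apply: Fge0.
have hDE : (m ord0 - m a) * (l ord0 - l a) <= 0.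
  have h1 := hL a a0.
  move: Ha h1; rewrite -/l -/m.
  case: (ltrP (l ord0) (l a)) => h1; case: (ltrP (m ord0) (m a)) => h2 //= _ h3; nra.
have hp := @pair_ineq R _ _ _ _ _ _ (hu ord0) (hu a) hDE
  (_ : (m ord0 - l ord0) - (m a - l a) = (m ord0 - m a) - (l ord0 - l a)).
have hmin : u_objective beta mu ustar <= pair_term (m ord0 - m a) (ustar ord0) (ustar a).
  exact: (bigmin_le_cond _ (P := fun b : 'I_K.+1 => b != ord0)).
apply: le_trans hsplit.
apply: le_trans (lerD (Flb ord0) (Flb a)).
have sS : 0 < sigma ^+ 2 * S ^+ 2 by apply: mulr_gt0; apply: exprn_gt0.
apply: le_trans (_ : pair_term (m ord0 - m a) (ustar ord0) (ustar a) / (sigma ^+ 2 * S ^+ 2) <= _).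
  by rewrite ler_pM2r // invr_gt0.
have hp' := hp (ltac:(ring)).
have -> : ustar ord0 * (m ord0 - l ord0) ^+ 2 / (2 * sigma ^+ 2 * S ^+ 2) +
   ustar a * (m a - l a) ^+ 2 / (2 * sigma ^+ 2 * S ^+ 2) =
   (ustar ord0 * (m ord0 - l ord0) ^+ 2 + ustar a * (m a - l a) ^+ 2) / 2 / (sigma ^+ 2 * S ^+ 2).
  by field; rewrite ?S0 ?s0.
by rewrite ler_pM2r // invr_gt0.
Qed.

Lemma construct (R : realType) (K J : nat) (sigma : R) (beta : 'I_J -> R)
  (mu w : 'I_K.+1 -> 'I_J -> R) (b : 'I_K.+1) (eps : R) :
  0 < sigma -> 0 < \sum_(j < J) `|beta j| -> in_L beta mu ->
  (forall a i, 0 <= w a i) -> b != ord0 -> 0 < eps ->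
  exists lam, Alt beta mu lam /\
    \sum_(a < K.+1) \sum_(i < J) w a i * kl_gauss sigma (mu a i) (lam a i) <=
    pair_term (arm_mean beta mu ord0 - arm_mean beta mu b)
      (\sum_(i < J) w ord0 i) (\sum_(i < J) w b i)
      / (sigma ^+ 2 * (\sum_(j < J) `|beta j|) ^+ 2) + eps.
Proof.
set S := \sum_(j < J) _ => hs hS hLmu hw b0 he.
set m := arm_mean beta mu.
pose u := fun a => \sum_(i < J) w a i.
change (\sum_(i < J) w ord0 i) with (u ord0).
change (\sum_(i < J) w b i) with (u b).
have hu : forall a, 0 <= u a by move=> a; apply: sumr_ge0 => i _.
have s0' : sigma != 0 by rewrite gt_eqF.
have S0 : S != 0 by rewrite gt_eqF.
set p := (u ord0 * m ord0 + u b * m b) / (u ord0 + u b).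
set e : R := if m ord0 < m b then 0 else 2.
have he0 : 0 <= e by rewrite /e; case: ifP.
set C := 2 * sigma ^+ 2 * S ^+ 2.
have Cpos : 0 < C by apply: mulr_gt0; [apply: mulr_gt0 => //; apply: exprn_gt0|apply: exprn_gt0].
set c1 := (2 * u ord0 * (p - m ord0) + 2 * u b * e * (p - m b)) / C.
set c2 := (u ord0 + u b * e ^+ 2) / C.
have c2ge : 0 <= c2.
  apply: divr_ge0; last exact: ltW.
  by apply: addr_ge0 => //; apply: mulr_ge0 => //; apply: sqr_ge0.
have Dpos : 0 < `|c1| + c2 + 1 by have := normr_ge0 c1; lra.
set s0 := Num.min 1 (eps / (`|c1| + c2 + 1)).
have s0pos : 0 < s0 by rewrite lt_min ltr01 /=; apply: divr_gt0.
have s01 : s0 <= 1 by rewrite ge_min lexx.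
have s0e : s0 <= eps / (`|c1| + c2 + 1) by rewrite ge_min lexx orbT.
set dl := \big[Num.min/s0]_(c < K.+1 | m c != p) `|m c - p|.
have dlpos : 0 < dl.
  apply/bigmin_gtP; split => // c hc; by rewrite normr_gt0 subr_eq0.
have dls0 : dl <= s0 by apply: bigmin_le_id.
have dlle : forall c, m c != p -> dl <= `|m c - p|.
  by move=> c hc; apply: (bigmin_le_cond _ (P := fun c => m c != p)).
set s := dl / 2.
have spos : 0 < s by apply: divr_gt0.
have sdl : s < dl by rewrite /s; lra.
set d := fun a : 'I_K.+1 => if a == ord0 then p + s - m ord0
                            else if a == b then p + e * s - m b else 0.
pose lam := fun a i => mu a i + d a / S * Num.sg (beta i).
exists lam.
have hmean : forall a, arm_mean beta lam a = m a + d a.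
  by move=> a; apply: mean_shift.
split; first split.
- move=> a a0; rewrite !hmean /d eqxx (negbTE a0).
  case: (eqVneq a b) => [->|ab]; rewrite ?eqxx ?(negbTE ab).
    apply/eqP => h; move: h he0; rewrite /e; case: ifP => _; lra.
  rewrite addr0.
  case: (eqVneq (m a) p) => [->|hne]; first by apply/eqP => h; lra.
  move: (dlle a hne) => hdl; apply/eqP => h.
  have hma : m a = p + s by move: h; lra.
  move: hdl; rewrite hma addrAC subrr add0r ger0_norm; [lra|exact: ltW].
- apply/negP => /eqP hS'.
  have : (b \in S_beta beta lam) = (b \in S_beta beta mu) by rewrite hS'.
  rewrite !inE b0 /= !hmean /d eqxx (negbTE b0) eqxx -/m.
  have -> : m ord0 + (p + s - m ord0) = p + s by ring.
  have -> : m b + (p + e * s - m b) = p + e * s by ring.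
  rewrite /e; case: ifP => h.
    move=> H; lra.
  move/negbT; rewrite -leNgt => H; lra.
- have hkl : forall a i, w a i * kl_gauss sigma (mu a i) (lam a i) <= w a i * (d a ^+ 2 / C).
    move=> a i; apply: ler_wpM2l => //; rewrite /kl_gauss /lam.
    have -> : (mu a i - (mu a i + d a / S * Num.sg (beta i))) ^+ 2 / (2 * sigma ^+ 2) =
              d a ^+ 2 / C * Num.sg (beta i) ^+ 2.
      by rewrite /C; field; rewrite ?S0 ?s0'.
    apply: ler_piMr.
      apply: divr_ge0; [apply: sqr_ge0|exact: ltW].
    by rewrite sqr_sg; case: (_ != 0); rewrite ?ler01 ?lexx.
  apply: le_trans (ler_sum _ (fun a _ => ler_sum _ (fun i _ => hkl a i))) _.
  have -> : \sum_(a < K.+1) \sum_(i < J) w a i * (d a ^+ 2 / C) =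
            \sum_(a < K.+1) u a * (d a ^+ 2 / C).
    by apply: eq_bigr => a _; rewrite /u mulr_suml.
  rewrite (bigD1 ord0) //= (bigD1 b) //= big1; last first.
    move=> a /andP[a0 ab]; rewrite /d (negbTE a0) (negbTE ab).
    by rewrite expr2 !mul0r mulr0.
  rewrite /d eqxx (negbTE b0) eqxx addr0.
  set g := (u ord0 * (p - m ord0) ^+ 2 + u b * (p - m b) ^+ 2) / C.
  have -> : u ord0 * ((p + s - m ord0) ^+ 2 / C) + u b * ((p + e * s - m b) ^+ 2 / C)
            = g + s * c1 + s ^+ 2 * c2.
    by rewrite /g /c1 /c2; field; rewrite gt_eqF.
  have hse : s * c1 + s ^+ 2 * c2 <= eps.
    have h1 : s * c1 <= s * `|c1| by apply: ler_wpM2l; [exact: ltW|exact: ler_norm].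
    have s1 : s <= 1 by lra.
    have h2 : s ^+ 2 * c2 <= s * c2.
      by rewrite expr2 -mulrA; apply: ler_piMl; [apply: mulr_ge0 => //; exact: ltW|].
    have h3 : s * (`|c1| + c2 + 1) <= eps.
      by rewrite -ler_pdivlMr //; lra.
    nra.
  have hg : g <= pair_term (m ord0 - m b) (u ord0) (u b) / (sigma ^+ 2 * S ^+ 2).
    rewrite /pair_term; case: ifP => [/andP[p0 pb] | hn].
      rewrite le_eqVlt; apply/orP; left; apply/eqP.
      rewrite /g /p /C; field.
      by rewrite ?S0 ?s0' ?gt_eqF //; lra.
    rewrite mul0r.
    have [h0|h0] : u ord0 = 0 \/ u b = 0.
      move: hn; rewrite !lt_def !hu !andbT.
      by case/nandP => /negPn/eqP h; [left|right].
    + rewrite /g h0 mul0r add0r.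
      case: (eqVneq (u b) 0) => [->|hb]; first by rewrite !mul0r.
      have -> : p = m b by rewrite /p h0; field.
      by rewrite subrr expr2 mul0r mulr0 mul0r.
    + rewrite /g h0 mul0r addr0.
      case: (eqVneq (u ord0) 0) => [->|hb]; first by rewrite !mul0r.
      have -> : p = m ord0 by rewrite /p h0; field.
      by rewrite subrr expr2 mul0r mulr0 mul0r.
  lra.
Qed.

Lemma key_upper (R : realType) (K J : nat) (sigma : R) (beta : 'I_J -> R)
  (mu w : 'I_K.+1 -> 'I_J -> R) :
  (0 < K)%N -> 0 < sigma -> 0 < \sum_(j < J) `|beta j| -> in_L beta mu ->
  (forall a i, 0 <= w a i) ->
  alt_objective sigma beta mu w <=
  u_objective beta mu (fun a => \sum_(i < J) w a i) / (sigma ^+ 2 * (\sum_(j < J) `|beta j|) ^+ 2).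
Proof.
set S := \sum_(j < J) _ => K0 hs hS hL hw.
have sS : 0 < sigma ^+ 2 * S ^+ 2 by apply: mulr_gt0; apply: exprn_gt0.
rewrite /alt_objective.
match goal with |- is_true (inf ?X <= _) => set E := X end.
have lbE : has_lbound E.
  exists 0 => x [lam _ <-]; apply: sumr_ge0 => a _; apply: sumr_ge0 => i _.
  apply: mulr_ge0 => //; rewrite /kl_gauss; apply: divr_ge0; first exact: sqr_ge0.
  by apply: mulr_ge0 => //; apply: sqr_ge0.
have hb : forall b : 'I_K.+1, b != ord0 -> inf E * (sigma ^+ 2 * S ^+ 2) <=
     pair_term (arm_mean beta mu ord0 - arm_mean beta mu b)
      (\sum_(i < J) w ord0 i) (\sum_(i < J) w b i).
  move=> b b0; rewrite -ler_pdivlMr //.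
  apply/ler_addgt0Pr => eps he.
  have [lam [hA hc]] := @construct R K J sigma beta mu w b eps hs hS hL hw b0 he.
  apply: le_trans hc; apply: (ge_inf lbE); by exists lam.
rewrite ler_pdivlMr //; apply: le_bigmin => [|b b0]; last exact: hb.
apply: hb; apply/eqP => /(congr1 val) /= h; by move: K0; rewrite h.
Qed.

Lemma key_lower (R : realType) (K J : nat) (sigma : R) (beta : 'I_J -> R)
  (mu : 'I_K.+1 -> 'I_J -> R) (ustar : 'I_K.+1 -> R) :
  (0 < K)%N -> 0 < sigma -> 0 < \sum_(j < J) `|beta j| -> in_L beta mu ->
  (forall a, 0 <= ustar a) ->
  u_objective beta mu ustar / (sigma ^+ 2 * (\sum_(j < J) `|beta j|) ^+ 2) <=
  alt_objective sigma beta mu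
    (fun a i => ustar a * (`|beta i| / \sum_(j < J) `|beta j|)).
Proof.
set S := \sum_(j < J) _ => K0 hs hS hL hu.
rewrite /alt_objective; apply: lb_le_inf.
  have b0 : (ord_max : 'I_K.+1) != ord0.
    apply/eqP => /(congr1 val) /= h; by move: K0; rewrite h.
  have hw : forall a i, 0 <= ustar a * (`|beta i| / S).
    by move=> a i; apply: mulr_ge0 => //; apply: divr_ge0 => //; exact: ltW.
  have [lam [hA _]] := @construct R K J sigma beta mu _ ord_max 1 hs hS hL hw b0 ltr01.
  by eexists; exists lam.
move=> x [lam hA <-]; exact: lower_bound.
Qed.

Theorem proposition3 (R : realType) (K J : nat) (sigma : R)
  (alpha beta : 'I_J -> R) (mu : 'I_K.+1 -> 'I_J -> R) (ustar : 'I_K.+1 -> R) :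
  (0 < K)%N ->
  0 < sigma ->
  in_simplex alpha ->
  in_L beta mu ->
  (exists i, beta i != 0) ->
  in_simplex ustar ->
  (forall u : 'I_K.+1 -> R, in_simplex u ->
     u_objective beta mu u <= u_objective beta mu ustar) ->
  let wstar := fun (a : 'I_K.+1) (i : 'I_J) =>
                 ustar a * (`|beta i| / \sum_(j < J) `|beta j|) in
  optimal_weights (@C_active R K J) sigma beta mu wstar /\
  ((forall i, alpha i = beta i) ->
     optimal_weights (C_agnostic alpha) sigma beta mu wstar /\
     optimal_weights (C_prop alpha) sigma beta mu wstar).
Proof.
move=> K0 hs [hal0 hal1] hL [i0 hb0] [hu0 hu1] hopt wstar.
set S := \sum_(j < J) `|beta j|.
have hS : 0 < S.
  apply: (lt_le_trans (_ : 0 < `|beta i0|)); first by rewrite normr_gt0.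
  by rewrite /S (bigD1 i0) //= lerDl; apply: sumr_ge0.
have S0 : S != 0 by rewrite gt_eqF.
have sS : 0 < sigma ^+ 2 * S ^+ 2 by apply: mulr_gt0; apply: exprn_gt0.
have hwA : C_active wstar.
  split.
    by move=> a i; apply: mulr_ge0 => //; apply: divr_ge0 => //; exact: ltW.
  rewrite /wstar.
  under eq_bigr do rewrite -mulr_sumr -mulr_suml -/S divff // mulr1.
  exact: hu1.
have opt_of : forall C : ('I_K.+1 -> 'I_J -> R) -> Prop,
    C wstar -> (forall w, C w -> C_active w) -> optimal_weights C sigma beta mu wstar.
  move=> C hC hCA; split => // w' /hCA [hw0 hw1].
  apply: le_trans (@key_upper R K J sigma beta mu w' K0 hs hS hL hw0) _.
  apply: le_trans (@key_lower R K J sigma beta mu ustar K0 hs hS hL hu0).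
  rewrite ler_pM2r ?invr_gt0 //; apply: hopt; split => //.
  by move=> a; apply: sumr_ge0.
split; first exact: opt_of.
move=> hab.
have hb0' : forall i, 0 <= beta i by move=> i; rewrite -hab.
have S1 : S = 1 by rewrite /S -hal1; apply: eq_bigr => i _; rewrite hab ger0_norm.
have hw : forall a i, wstar a i = alpha i * ustar a.
  by move=> a i; rewrite /wstar -/S S1 divr1 ger0_norm // hab mulrC.
split; apply: opt_of.
- by exists ustar; split.
- move=> w [u [[hu0' hu1'] hwu]]; split.
    by move=> a i; rewrite hwu; apply: mulr_ge0.
  under eq_bigr do under eq_bigr do rewrite hwu.
  rewrite exchange_big /=.
  under eq_bigr do rewrite -mulr_sumr hu1' mulr1.
  exact: hal1.
- split => // i.
  under eq_bigr do rewrite hw.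
  by rewrite -mulr_sumr hu1 mulr1.
- by move=> w [].
Qed.
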